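(* Let $0<q<1$ and let $T$ be an optimal tree for $\mathrm{TDGD}(q)$. For every $s\ge 0$, the leaves of $T$ corresponding to symbols of signature $s$ all lie at depths $d$ with $d\in\{d_0,d_0+1\}$ for some $d_0$; i.e., they occupy at most two consecutive levels of $T$.
   Context: $\mathcal{A}=\{(i,j): i,j\in\mathbb{Z}_{\ge 0}\}$; $\mathrm{TDGD}(q)$ is the distribution $P(i,j)=(1-q)^2q^{i+j}$ on $\mathcal{A}$. A prefix code for $\mathcal{A}$ is a full binary tree whose leaves are in bijection with $\mathcal{A}$; codeword length = depth of leaf; a tree is optimal for $\mathrm{TDGD}(q)$ if it minimizes expected codeword length. The signature of $(i,j)$ is $s=i+j$; a level of a tree is the set of nodes at a given depth. *)

(* Defs.v *)
From Stdlib Require Import Reals List.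
Import ListNotations.
Open Scope R_scope.

(* A symbol of the alphabet A = Z_{>=0} x Z_{>=0} is a pair (i,j) of nats.
   A prefix code for A is represented by its codeword map
   c : nat -> nat -> list bool; the code tree is the set of all prefixes of
   codewords, its leaves are the codewords, and the depth of the leaf of
   (i,j) is the length of c i j. *)

Definition is_prefix (u w : list bool) : Prop := exists v, w = u ++ v.

Definition is_strict_prefix (u w : list bool) : Prop :=
  exists v, v <> [] /\ w = u ++ v.

(* The codewords form the leaf set of a full binary tree, with leaves in
   bijection with A:
   - distinct symbols have codewords none of which is a prefix of the other
     (prefix-freeness; in particular c is injective, and codewords are
     exactly the leaves of the tree of prefixes);
   - fullness: every internal node (strict prefix of some codeword) has both
     children in the tree. *)
Definition prefix_code (c : nat -> nat -> list bool) : Prop :=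
  (forall i j i' j', (i, j) <> (i', j') -> ~ is_prefix (c i j) (c i' j')) /\
  (forall (w : list bool) (b : bool),
     (exists i j, is_strict_prefix w (c i j)) ->
     exists i' j', is_prefix (w ++ [b]) (c i' j')).

Definition tdgd (q : R) (i j : nat) : R := (1 - q) ^ 2 * q ^ (i + j).

(* Partial sums of the expected length, grouped by signature s = i+j
   (terms are nonnegative, so the order of summation is irrelevant). *)
Definition partial_exp_len (q : R) (c : nat -> nat -> list bool) (n : nat) : R :=
  sum_f_R0 (fun s => sum_f_R0 (fun i => tdgd q i (s - i)%nat * INR (length (c i (s - i)%nat))) s) n.

(* exp_len q c L : the expected codeword length of c under TDGD(q) is the
   finite value L (if the series diverges, the expected length is +infinity
   and no L satisfies this). *)
Definition exp_len (q : R) (c : nat -> nat -> list bool) (L : R) : Prop :=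
  Un_cv (partial_exp_len q c) L.

Definition optimal_code (q : R) (c : nat -> nat -> list bool) : Prop :=
  prefix_code c /\
  exists L, exp_len q c L /\
    forall c' L', prefix_code c' -> exp_len q c' L' -> L <= L'.

(* Main.v *)
Require Import Defs.
From Stdlib Require Import Reals List Lra Lia Classical Arith.
Import ListNotations.
Open Scope R_scope.

Definition cmp (a b : list bool) := is_prefix a b \/ is_prefix b a.

Lemma pre_refl a : is_prefix a a.
Proof. exists []; now rewrite app_nil_r. Qed.
Lemma pre_app a s : is_prefix a (a ++ s).
Proof. now exists s. Qed.
Lemma pre_trans a b c : is_prefix a b -> is_prefix b c -> is_prefix a c.
Proof. intros [r1 ->] [r2 ->]. exists (r1 ++ r2). now rewrite app_assoc. Qed.
Lemma pre_len a b : is_prefix a b -> (length a <= length b)%nat.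
Proof. intros [r ->]. rewrite length_app. lia. Qed.
Lemma pre_app_inv a s b : is_prefix (a ++ s) b -> is_prefix a b.
Proof. intros H. eapply pre_trans; [apply pre_app|exact H]. Qed.
Lemma pre_cancel v t t' : is_prefix (v ++ t) (v ++ t') -> is_prefix t t'.
Proof. intros [r H]. rewrite <- app_assoc in H. apply app_inv_head in H. now exists r. Qed.
Lemma pre_cancel_r v t t' : is_prefix t t' -> is_prefix (v ++ t) (v ++ t').
Proof. intros [r ->]. exists r. now rewrite app_assoc. Qed.
Lemma pre_common a : forall b l, is_prefix a l -> is_prefix b l -> cmp a b.
Proof.
  induction a as [|x a IH]; intros b l H1 H2.
  - left. now exists b.
  - destruct b as [|y b].
    + right. now exists (x :: a).
    + destruct H1 as [r1 H1], H2 as [r2 H2]. subst l. simpl in H2.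
      injection H2 as Hxy H2. subst y.
      destruct (IH b (a ++ r1) (ex_intro _ r1 eq_refl) (ex_intro _ r2 H2)) as [[r Hr]|[r Hr]].
      * left. exists r. simpl. now rewrite Hr.
      * right. exists r. simpl. now rewrite Hr.
Qed.
Lemma cmp_sym a b : cmp a b -> cmp b a.
Proof. intros [H|H]; [right|left]; exact H. Qed.
Lemma K2 a b s : cmp a (b ++ s) -> cmp a b.
Proof.
  intros [H|H].
  - eapply pre_common; [exact H|apply pre_app].
  - right. eapply pre_app_inv; exact H.
Qed.
Lemma K2l a b s : cmp (a ++ s) b -> cmp a b.
Proof. intros H. apply cmp_sym, K2 with s, cmp_sym, H. Qed.

Lemma strict_last v r w0 b0 : v ++ r = w0 ++ [b0] -> r <> [] -> is_prefix v w0.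
Proof.
  intros H Hr. destruct (exists_last Hr) as [r' [b' ->]].
  rewrite app_assoc in H. apply app_inj_tail in H. destruct H as [H _].
  exists r'. now rewrite H.
Qed.
Lemma strict_len a b : is_strict_prefix a b -> (length a < length b)%nat.
Proof. intros [r [Hr ->]]. rewrite length_app. destruct r; [congruence|simpl; lia]. Qed.
Lemma S_lemma a v s : is_prefix a (v ++ s) -> ~ is_strict_prefix v a -> is_prefix a v.
Proof.
  intros H Hn. destruct (pre_common a v (v ++ s) H (pre_app v s)) as [H1|[r Hr]]; auto.
  destruct r. { rewrite app_nil_r in Hr. subst. apply pre_refl. }
  exfalso. apply Hn. exists (b :: r). split; [congruence|auto].
Qed.
Lemma strict_app1 a u bb : is_strict_prefix a (u ++ [bb]) -> a = u \/ is_strict_prefix a u.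
Proof.
  intros [s [Hs H]].
  destruct (pre_common a u (u ++ [bb]) (ex_intro _ s H) (pre_app u [bb])) as [[r Hr]|[r Hr]].
  - destruct r. { left. rewrite app_nil_r in Hr. auto. }
    right. exists (b :: r). split; [congruence|auto].
  - subst a. rewrite <- app_assoc in H. apply app_inv_head in H.
    destruct r. { left. now rewrite app_nil_r. }
    destruct r; simpl in H; [|injection H as _ H; destruct r; discriminate].
    injection H as _ H. congruence.
Qed.
Lemma strict_split w0 v t : is_strict_prefix w0 (v ++ t) -> is_prefix v w0 ->
  exists t1, w0 = v ++ t1 /\ is_strict_prefix t1 t.
Proof.
  intros [s [Hs H]] [t1 ->]. exists t1. split; auto. exists s. split; auto.
  rewrite <- app_assoc in H. now apply app_inv_head in H.
Qed.
Lemma pre_notv w0 v : ~ is_prefix v w0 -> is_prefix w0 v -> is_strict_prefix w0 v.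
Proof.
  intros Hn [r Hr]. destruct r. { subst. rewrite app_nil_r in Hn. exfalso; apply Hn, pre_refl. }
  exists (b :: r). split; [congruence|auto].
Qed.

Definition under (w l : list bool) : option (list bool) :=
  if list_eq_dec Bool.bool_dec (firstn (length w) l) w then Some (skipn (length w) l) else None.
Lemma under_some w l t : under w l = Some t -> l = w ++ t.
Proof.
  unfold under. destruct list_eq_dec as [e|e]; intros H; [|discriminate].
  injection H as <-. pattern w at 1; rewrite <- e. symmetry. apply firstn_skipn.
Qed.
Lemma under_none w l : under w l = None -> ~ is_prefix w l.
Proof.
  unfold under. destruct list_eq_dec as [e|e]; intros H; [discriminate|].
  intros [r ->]. apply e. rewrite firstn_app, firstn_all, Nat.sub_diag. simpl. now rewrite app_nil_r.
Qed.

Definition D (f : nat -> nat -> R) (n : nat) : R :=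
  sum_f_R0 (fun s => sum_f_R0 (fun i => f i (s - i)%nat) s) n.

Lemma D_le f g n : (forall i j, f i j <= g i j) -> D f n <= D g n.
Proof. intros H. unfold D. apply sum_Rle; intros. apply sum_Rle; intros. apply H. Qed.

Lemma D_plus f g n : D (fun i j => f i j + g i j) n = D f n + D g n.
Proof.
  unfold D. rewrite <- plus_sum. apply sum_eq. intros. apply plus_sum.
Qed.

Definition pt (a b : nat) (v : R) (i j : nat) : R :=
  if (Nat.eqb i a && Nat.eqb j b)%bool then v else 0.

Lemma pt_inner a b v s : forall m, (m <= s)%nat ->
  sum_f_R0 (fun i => pt a b v i (s - i)%nat) m =
  if (Nat.leb a m && Nat.eqb s (a + b))%bool then v else 0.
Proof.
  induction m; intros Hm.
  - simpl; unfold pt. destruct (Nat.eqb_spec 0 a), (Nat.eqb_spec (s - 0) b), (Nat.leb_spec a 0),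
      (Nat.eqb_spec s (a + b)); simpl; try lra; lia.
  - simpl sum_f_R0. rewrite IHm by lia. unfold pt.
    destruct (Nat.eqb_spec (S m) a), (Nat.eqb_spec (s - S m) b), (Nat.leb_spec a m),
      (Nat.leb_spec a (S m)), (Nat.eqb_spec s (a + b)); simpl; try lra; lia.
Qed.

Lemma D_pt a b v n : D (pt a b v) n = if Nat.leb (a + b) n then v else 0.
Proof.
  unfold D. induction n.
  - transitivity (sum_f_R0 (fun i => pt a b v i (0 - i)%nat) 0); [reflexivity|].
    rewrite pt_inner by lia.
    destruct (Nat.leb_spec a 0), (Nat.eqb_spec 0 (a + b)), (Nat.leb_spec (a + b) 0); simpl; try lra; lia.
  - transitivity (sum_f_R0 (fun s => sum_f_R0 (fun i => pt a b v i (s - i)%nat) s) n +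
        sum_f_R0 (fun i => pt a b v i (S n - i)%nat) (S n)); [reflexivity|].
    rewrite IHn, pt_inner by lia.
    destruct (Nat.leb_spec a (S n)), (Nat.eqb_spec (S n) (a + b)), (Nat.leb_spec (a + b) n),
      (Nat.leb_spec (a+b) (S n)); simpl; try lra; lia.
Qed.

Lemma D_growing f : (forall i j, 0 <= f i j) -> Un_growing (D f).
Proof.
  intros H n. unfold Un_growing.
  replace (D f (S n)) with (D f n + sum_f_R0 (fun i => f i (S n - i)%nat) (S n)) by reflexivity.
  assert (0 <= sum_f_R0 (fun i => f i (S n - i)%nat) (S n)).
  { apply cond_pos_sum. intros; apply H. } lra.
Qed.

Lemma grow_mono u : Un_growing u -> forall n m, (n <= m)%nat -> u n <= u m.
Proof.
  intros H n m Hnm. induction Hnm; [lra|]. specialize (H m). lra.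
Qed.

Lemma tdgd_pos q i j : 0 < q -> q < 1 -> 0 < tdgd q i j.
Proof.
  intros. unfold tdgd. apply Rmult_lt_0_compat.
  - apply pow_lt. lra.
  - apply pow_lt. lra.
Qed.

Section Constr.
Variables (q : R) (c : nat -> nat -> list bool) (i1 j1 i2 j2 : nat) (v : list bool) (b : bool).
Hypothesis hq0 : 0 < q.
Hypothesis hq1 : q < 1.
Hypothesis hpc : prefix_code c.
Hypothesis hy : c i2 j2 = v ++ [b].
Hypothesis hlen : (length (c i1 j1) + 2 <= length (c i2 j2))%nat.

Definition newc (i j : nat) : list bool :=
  if (Nat.eqb i i1 && Nat.eqb j j1)%bool then c i1 j1 ++ [false]
  else if (Nat.eqb i i2 && Nat.eqb j j2)%bool then c i1 j1 ++ [true]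
  else match under (v ++ [negb b]) (c i j) with Some t => v ++ t | None => c i j end.

Lemma hpf i j i' j' : ~ (i = i' /\ j = j') -> ~ is_prefix (c i j) (c i' j').
Proof. intros H. apply (proj1 hpc). intros E. injection E. tauto. Qed.

Lemma hlenv : length (c i2 j2) = S (length v).
Proof. rewrite hy, length_app. simpl. lia. Qed.

Lemma hxy : ~ (i1 = i2 /\ j1 = j2).
Proof. intros [-> ->]. lia. Qed.

Lemma huv : ~ cmp (c i1 j1) v.
Proof.
  intros [H|H].
  - apply (hpf i1 j1 i2 j2 hxy). rewrite hy. eapply pre_trans; [exact H|apply pre_app].
  - apply pre_len in H. pose proof hlenv. lia.
Qed.

Lemma nb_fact : ~ is_prefix (v ++ [negb b]) (v ++ [b]).
Proof. intros H. apply pre_cancel in H. destruct H as [r H]. destruct b; discriminate. Qed.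

Lemma class i j :
  (i = i1 /\ j = j1 /\ newc i j = c i1 j1 ++ [false]) \/
  (i = i2 /\ j = j2 /\ newc i j = c i1 j1 ++ [true]) \/
  (~ (i = i1 /\ j = j1) /\ ~ (i = i2 /\ j = j2) /\
     exists t, c i j = (v ++ [negb b]) ++ t /\ newc i j = v ++ t) \/
  (~ (i = i1 /\ j = j1) /\ ~ (i = i2 /\ j = j2) /\
     newc i j = c i j /\ ~ is_prefix (v ++ [negb b]) (c i j)).
Proof.
  unfold newc.
  destruct (Nat.eqb_spec i i1), (Nat.eqb_spec j j1); simpl; [left; auto| | |];
  (destruct (Nat.eqb_spec i i2), (Nat.eqb_spec j j2); simpl; [right; left; auto| | |]);
  (destruct (under (v ++ [negb b]) (c i j)) eqn:E;
   [right; right; left; split; [tauto|split; [tauto|]]; exists l; split; auto; now apply under_some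
   |right; right; right; split; [tauto|split; [tauto|]]; split; auto; now apply under_none]).
Qed.

Lemma O_fact i j : ~ (i = i1 /\ j = j1) -> ~ (i = i2 /\ j = j2) ->
  ~ is_prefix (v ++ [negb b]) (c i j) -> ~ cmp v (c i j).
Proof.
  intros H1 H2 H3 [[r Hr]|H].
  - destruct r as [|b' r].
    + rewrite app_nil_r in Hr. apply (hpf i j i2 j2 H2). rewrite hy, <- Hr. apply pre_app.
    + destruct (Bool.bool_dec b' b) as [->|nb].
      * apply (hpf i2 j2 i j). { intros [-> ->]; tauto. } rewrite hy, Hr. exists r.
        now rewrite <- app_assoc.
      * apply H3. rewrite Hr. exists r. replace (negb b) with b' by (destruct b, b'; simpl; congruence).
        now rewrite <- app_assoc.
  - apply (hpf i j i2 j2 H2). rewrite hy. eapply pre_trans; [exact H|apply pre_app].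
Qed.

Lemma z0_ex : exists i0 j0 t0, c i0 j0 = (v ++ [negb b]) ++ t0.
Proof.
  destruct (proj2 hpc v (negb b)) as [i0 [j0 [t0 H]]].
  { exists i2, j2. rewrite hy. exists [b]. split; [congruence|auto]. }
  eauto.
Qed.

Lemma vfact : exists i0 j0, is_prefix v (newc i0 j0).
Proof.
  destruct z0_ex as [i0 [j0 [t0 H]]]. exists i0, j0.
  destruct (class i0 j0) as [[-> [-> _]]|[[-> [-> _]]|[[_ [_ [t [Ht ->]]]]|[_ [_ [_ Hn]]]]]].
  - exfalso. apply huv. right. rewrite H. rewrite <- app_assoc. apply pre_app.
  - exfalso. apply nb_fact. rewrite <- hy, H. apply pre_app.
  - apply pre_app.
  - exfalso. apply Hn. rewrite H. apply pre_app.
Qed.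

Lemma lemA a i j : is_prefix a (c i j) -> ~ is_strict_prefix v a ->
  exists i' j', is_prefix a (newc i' j').
Proof.
  intros Ha Hs.
  destruct (class i j) as [[-> [-> E]]|[[-> [-> E]]|[[_ [_ [t [Ht E]]]]|[_ [_ [E _]]]]]].
  - exists i1, j1. rewrite E. eapply pre_trans; [exact Ha|apply pre_app].
  - rewrite hy in Ha. apply S_lemma in Ha; auto.
    destruct vfact as [i0 [j0 H]]. exists i0, j0. eapply pre_trans; eauto.
  - exists i, j. rewrite E. rewrite Ht, <- app_assoc in Ha. apply S_lemma in Ha; auto.
    eapply pre_trans; [exact Ha|apply pre_app].
  - exists i, j. now rewrite E.
Qed.

Lemma newc_x : newc i1 j1 = c i1 j1 ++ [false].
Proof. unfold newc. now rewrite !Nat.eqb_refl. Qed.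
Lemma newc_y : newc i2 j2 = c i1 j1 ++ [true].
Proof.
  unfold newc. rewrite !Nat.eqb_refl. simpl.
  destruct (Nat.eqb_spec i2 i1), (Nat.eqb_spec j2 j1); simpl; auto.
  exfalso; apply hxy; auto.
Qed.

Lemma strict_to_pre a l : is_strict_prefix a l -> is_prefix a l.
Proof. intros [r [_ H]]. now exists r. Qed.

Lemma newc_code : prefix_code newc.
Proof.
  split.
  - intros i j i' j' Hne Hp. assert (Hne' : ~ (i = i' /\ j = j')) by (intros [-> ->]; auto).
    destruct (class i j) as [[-> [-> E]]|[[-> [-> E]]|[[X1 [Y1 [t [Ht E]]]]|[X1 [Y1 [E Hn]]]]]];
    destruct (class i' j') as [[-> [-> E']]|[[-> [-> E']]|[[X2 [Y2 [t' [Ht' E']]]]|[X2 [Y2 [E' Hn']]]]]];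
    try (exfalso; apply Hne'; auto; fail); rewrite E, E' in Hp.
    + apply pre_cancel in Hp. destruct Hp; discriminate.
    + apply huv. apply K2l with [false]. apply K2 with t'. now left.
    + apply pre_app_inv in Hp. exact (hpf _ _ _ _ Hne' Hp).
    + apply pre_cancel in Hp. destruct Hp; discriminate.
    + apply huv. apply K2l with [true]. apply K2 with t'. now left.
    + apply pre_app_inv in Hp. exact (hpf _ _ _ _ (fun H => X2 (conj (eq_sym (proj1 H)) (eq_sym (proj2 H)))) Hp).
    + apply huv. apply cmp_sym. apply K2l with t. apply K2 with [false]. now left.
    + apply huv. apply cmp_sym. apply K2l with t. apply K2 with [true]. now left.
    + apply pre_cancel in Hp. apply (pre_cancel_r (v ++ [negb b])) in Hp.
      rewrite <- Ht, <- Ht' in Hp. exact (hpf _ _ _ _ Hne' Hp).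
    + apply (O_fact i' j' X2 Y2 Hn'). apply K2l with t. now left.
    + destruct (pre_common _ _ _ Hp (pre_app (c i1 j1) [false])) as [H|H];
        [exact (hpf _ _ _ _ X1 H)|exact (hpf i1 j1 i j (fun H => X1 (conj (eq_sym (proj1 H)) (eq_sym (proj2 H)))) H)].
    + destruct (pre_common _ _ _ Hp (pre_app (c i1 j1) [true])) as [H|H];
        [exact (hpf _ _ _ _ X1 H)|exact (hpf i1 j1 i j (fun H => X1 (conj (eq_sym (proj1 H)) (eq_sym (proj2 H)))) H)].
    + apply (O_fact i j X1 Y1 Hn). apply cmp_sym. apply K2 with t'. now left.
    + exact (hpf _ _ _ _ Hne' Hp).
  - intros w0 b0 [i [j Hs]].
    destruct (class i j) as [[-> [-> E]]|[[-> [-> E]]|[[X1 [Y1 [t [Ht E]]]]|[X1 [Y1 [E Hn]]]]]];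
    rewrite E in Hs.
    1,2: destruct (strict_app1 _ _ _ Hs) as [->|Hs'];
      [destruct b0; [exists i2, j2; rewrite newc_y; apply pre_refl|exists i1, j1; rewrite newc_x; apply pre_refl]
      |destruct (proj2 hpc w0 b0) as [i' [j' H]]; [exists i1, j1; auto|];
       apply (lemA _ i' j' H); intros Hv; apply strict_len in Hv; apply strict_len in Hs';
       pose proof hlenv; rewrite length_app in Hv; simpl in Hv; lia].
    + destruct (classic (is_prefix v w0)) as [Hv|Hv].
      * destruct (strict_split _ _ _ Hs Hv) as [t1 [-> [s [Hs0 ->]]]].
        destruct (proj2 hpc ((v ++ [negb b]) ++ t1) b0) as [i' [j' H]].
        { exists i, j. rewrite Ht. exists s. split; auto. now rewrite app_assoc. }
        destruct (class i' j') as [[-> [-> E']]|[[-> [-> E']]|[[X2 [Y2 [t' [Ht' E']]]]|[X2 [Y2 [E' Hn']]]]]].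
        -- exfalso. apply huv. right. do 2 apply pre_app_inv in H. now apply pre_app_inv in H.
        -- exfalso. apply nb_fact. rewrite <- hy. do 2 apply pre_app_inv in H. exact H.
        -- exists i', j'. rewrite E'. rewrite Ht', <- app_assoc in H. apply pre_cancel in H.
           rewrite <- app_assoc. now apply pre_cancel_r.
        -- exfalso. apply Hn'. do 2 apply pre_app_inv in H. exact H.
      * assert (Hw : is_strict_prefix w0 v).
        { apply pre_notv; auto.
          destruct (pre_common _ _ _ (strict_to_pre _ _ Hs) (pre_app v t)) as [H|H]; auto.
          contradiction. }
        destruct (proj2 hpc w0 b0) as [i' [j' H]].
        { exists i2, j2. rewrite hy. destruct Hw as [r [Hr ->]]. exists (r ++ [b]).
          split; [destruct r; simpl; congruence|now rewrite app_assoc]. }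
        apply (lemA _ i' j' H). intros Hv'. apply strict_len in Hv'. apply strict_len in Hw.
        rewrite length_app in Hv'. simpl in Hv'. lia.
    + destruct (proj2 hpc w0 b0) as [i' [j' H]]; [exists i, j; auto|].
      apply (lemA _ i' j' H). intros [r [Hr E0]].
      apply (O_fact i j X1 Y1 Hn). left.
      eapply pre_trans; [apply (strict_last v r w0 b0); auto|apply strict_to_pre; exact Hs].
Qed.

End Constr.

Lemma pt_eq a b v : pt a b v a b = v.
Proof. unfold pt. now rewrite !Nat.eqb_refl. Qed.
Lemma pt_neq a b v i j : ~ (i = a /\ j = b) -> pt a b v i j = 0.
Proof.
  intros H. unfold pt. destruct (Nat.eqb_spec i a), (Nat.eqb_spec j b); simpl; auto.
  exfalso; auto.
Qed.
Lemma tdgd_nn q i j : 0 < q -> q < 1 -> 0 <= tdgd q i j.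
Proof. intros. left. now apply tdgd_pos. Qed.

Lemma cost q c i1 j1 i2 j2 v b i0 j0 t0 (hq0 : 0 < q) (hq1 : q < 1) (hpc : prefix_code c)
  (hy : c i2 j2 = v ++ [b]) (hlen : (length (c i1 j1) + 2 <= length (c i2 j2))%nat)
  (hs : (i1 + j1 = i2 + j2)%nat) (hz0 : c i0 j0 = (v ++ [negb b]) ++ t0) (i j : nat) :
  tdgd q i j * INR (length (newc c i1 j1 i2 j2 v b i j)) +
  (pt i1 j1 (- tdgd q i1 j1) i j + pt i2 j2 (tdgd q i1 j1) i j + pt i0 j0 (tdgd q i0 j0) i j)
  <= tdgd q i j * INR (length (c i j)).
Proof.
  assert (Hp : tdgd q i2 j2 = tdgd q i1 j1) by (unfold tdgd; now rewrite hs).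
  assert (Hx0 : ~ (i1 = i0 /\ j1 = j0)).
  { intros [-> ->]. apply (huv c i0 j0 i2 j2 v b hpc hy hlen). right. rewrite hz0, <- app_assoc. apply pre_app. }
  assert (Hy0 : ~ (i2 = i0 /\ j2 = j0)).
  { intros [-> ->]. apply (nb_fact c i0 j0 v b hy). rewrite <- hy, hz0. apply pre_app. }
  pose proof (hxy c i1 j1 i2 j2 hlen) as Hxy.
  pose proof (tdgd_pos q i j hq0 hq1) as T.
  destruct (class c i1 j1 i2 j2 v b i j) as [[-> [-> E]]|[[-> [-> E]]|[[X1 [Y1 [t [Ht E]]]]|[X1 [Y1 [E Hn]]]]]];
    rewrite E.
  - rewrite pt_eq, (pt_neq i2 j2), (pt_neq i0 j0) by auto.
    rewrite length_app, plus_INR. simpl INR. rewrite Rmult_plus_distr_l. lra.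
  - rewrite (pt_neq i1 j1), pt_eq, (pt_neq i0 j0) by (try intros [-> ->]; auto).
    rewrite <- Hp. pose proof hlen as H. apply le_INR in H. rewrite plus_INR in H.
    rewrite length_app, plus_INR. simpl INR in *. nra.
  - rewrite (pt_neq i1 j1), (pt_neq i2 j2) by auto.
    assert (pt i0 j0 (tdgd q i0 j0) i j <= tdgd q i j).
    { unfold pt. destruct (Nat.eqb_spec i i0), (Nat.eqb_spec j j0); simpl; subst; lra. }
    rewrite Ht. rewrite !length_app. rewrite !plus_INR. simpl INR. nra.
  - rewrite (pt_neq i1 j1), (pt_neq i2 j2), (pt_neq i0 j0) by
      (try (intros [-> ->]; apply Hn; rewrite hz0; apply pre_app); auto). lra.
Qed.

Lemma improve q c i1 j1 i2 j2 v b (hq0 : 0 < q) (hq1 : q < 1) (hpc : prefix_code c)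
  (hy : c i2 j2 = v ++ [b]) (hlen : (length (c i1 j1) + 2 <= length (c i2 j2))%nat)
  (hs : (i1 + j1 = i2 + j2)%nat) L (hL : exp_len q c L)
  (hmin : forall c' L', prefix_code c' -> exp_len q c' L' -> L <= L') : False.
Proof.
  destruct (z0_ex c i2 j2 v b hpc hy) as [i0 [j0 [t0 hz0]]].
  set (c' := newc c i1 j1 i2 j2 v b).
  set (F := fun i j => tdgd q i j * INR (length (c i j))).
  set (F' := fun i j => tdgd q i j * INR (length (c' i j))).
  set (p0 := tdgd q i0 j0).
  assert (Hp0 : 0 < p0) by (apply tdgd_pos; auto).
  assert (HF' : forall i j, 0 <= F' i j).
  { intros. unfold F'. apply Rmult_le_pos; [apply tdgd_nn; auto|apply pos_INR]. }
  assert (HF : forall i j, 0 <= F i j).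
  { intros. unfold F. apply Rmult_le_pos; [apply tdgd_nn; auto|apply pos_INR]. }
  assert (hL' : Un_cv (D F) L) by exact hL.
  assert (Hb : forall n, D F' n <= L - p0).
  { intros n.
    set (N := Nat.max n (Nat.max (i1 + j1) (Nat.max (i2 + j2) (i0 + j0)))).
    apply Rle_trans with (D F' N).
    { apply grow_mono; [apply D_growing; auto|]. unfold N; lia. }
    pose proof (D_le (fun i j => F' i j + ((pt i1 j1 (- tdgd q i1 j1) i j + pt i2 j2 (tdgd q i1 j1) i j)
                                          + pt i0 j0 (tdgd q i0 j0) i j)) F N) as H.
    rewrite D_plus, D_plus, D_plus, !D_pt in H.
    replace (Nat.leb (i1 + j1) N) with true in H by (symmetry; apply Nat.leb_le; unfold N; lia).
    replace (Nat.leb (i2 + j2) N) with true in H by (symmetry; apply Nat.leb_le; unfold N; lia).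
    replace (Nat.leb (i0 + j0) N) with true in H by (symmetry; apply Nat.leb_le; unfold N; lia).
    assert (D F N <= L) by (apply growing_ineq; auto; apply D_growing; auto).
    assert (D F' N + (- tdgd q i1 j1 + tdgd q i1 j1 + tdgd q i0 j0) <= D F N).
    { apply H. intros i j. unfold F', F, c'.
      pose proof (cost q c i1 j1 i2 j2 v b i0 j0 t0 hq0 hq1 hpc hy hlen hs hz0 i j). lra. }
    unfold p0. lra. }
  destruct (growing_cv (D F')) as [L' HL'].
  { apply D_growing; auto. }
  { exists (L - p0). intros x [n ->]. apply Hb. }
  assert (L' <= L - p0).
  { apply (Rle_cv_lim Hb HL').
    intros eps He. exists 0%nat. intros. rewrite R_dist_eq. lra. }
  assert (L <= L') by (apply (hmin c' L'); [apply newc_code; auto|exact HL']).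
  lra.
Qed.

Lemma ex_min (P : nat -> Prop) : (exists n, P n) -> exists n, P n /\ forall m, P m -> (n <= m)%nat.
Proof.
  intros [n Hn]. revert Hn. induction n as [n IH] using (well_founded_induction lt_wf). intros Hn.
  destruct (classic (exists m, (m < n)%nat /\ P m)) as [[m [Hm Pm]]|Hno].
  - exact (IH m Hm Pm).
  - exists n. split; auto. intros m Pm. destruct (le_lt_dec n m); auto.
    exfalso. apply Hno. eauto.
Qed.

Theorem lemma1 (q : R) (hq0 : 0 < q) (hq1 : q < 1)
  (c : nat -> nat -> list bool) (hopt : optimal_code q c) :
  forall s : nat, exists d0 : nat,
    forall i j : nat, (i + j)%nat = s ->
      length (c i j) = d0 \/ length (c i j) = S d0.
Proof.
  intros s. destruct hopt as [hpc [L [hL hmin]]].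
  destruct (ex_min (fun m => exists i, (i <= s)%nat /\ length (c i (s - i)%nat) = m)) as [d0 [[i0 [Hi0 Hd0]] Hm]].
  { exists (length (c 0%nat (s - 0)%nat)). exists 0%nat. split; auto. lia. }
  exists d0. intros i j Hij.
  assert (Hge : (d0 <= length (c i j))%nat).
  { apply Hm. exists i. split; [lia|]. now replace (s - i)%nat with j by lia. }
  destruct (le_lt_dec (length (c i j)) (S d0)) as [Hle|Hgt]; [lia|].
  exfalso.
  assert (Hne : c i j <> []) by (intros E; rewrite E in Hgt; simpl in Hgt; lia).
  destruct (exists_last Hne) as [v [b Hv]].
  apply (improve q c i0 (s - i0)%nat i j v b hq0 hq1 hpc Hv) with L; auto; lia.
Qed.
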